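(* Let $\mathcal A^\Psi=\Psi\circ\mathcal A\circ\Psi^{-1}$. Then $\Psi$ maps $\mathcal T_0(\mathrm{OP})$ bijectively onto $I^{\mathcal D}\times I^{\mathbb N}_\infty$, and for all $f\in I^{\mathcal D}$ and $\alpha\in I^{\mathbb N}_\infty$, $$\mathcal A^\Psi(f,\alpha)=\bigl(f(\,\cdot\,+\tau^{-1}(\mathbb O[\alpha]-\alpha)),\ \mathbb O[\alpha]\bigr).$$
   Context: Let $I=\{0,1\}$. The graded graph $\mathrm{OP}$ has vertex sets $\mathrm{OP}_0=I$, $\mathrm{OP}_{n+1}=\mathrm{OP}_n\times\mathrm{OP}_n$; for $v=(v_0,v_1)\in\mathrm{OP}_{n+1}$ there is an edge of index $0$ from $v_0$ to $v$ and an edge of index $1$ from $v_1$ to $v$ (two distinct edges if $v_0=v_1$), and no other edges. $\mathcal T(\mathrm{OP})$ is the set of infinite paths $x=(v_0,e_0,v_1,e_1,\dots)$, $v_n\in\mathrm{OP}_n$, $e_n$ an edge from $v_n$ to $v_{n+1}$. A path is determined by its vertex on floor $N$ and the indices of its edges below floor $N$. The adic transformation $\mathcal A$ is defined on paths having at least one edge of index $0$: if $e_n$ is the first edge of $x$ with index $0$, then $\mathcal Ax$ coincides with $x$ from floor $n+1$ on, its edge from floor $n$ to $n+1$ has index $1$, and all its edges below floor $n$ have index $0$. $\mathcal T_0(\mathrm{OP})$ is the set of paths $x$ for which $\mathcal A^nx$ is defined for all $n\in\mathbb Z$. $\mathcal D=\bigoplus_{i\ge0}\mathbb Z/2\mathbb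 Z$ with generators $g_0,g_1,\dots$, $\mathcal D_n=\langle g_0,\dots,g_{n-1}\rangle$. $I^{\mathbb N}$ is the group of sequences $(\alpha_i)_{i\ge1}$ under coordinatewise addition mod 2; $\tau\colon\mathcal D\to I^{\mathbb N}$, $\tau(\sum_i\alpha_ig_{i-1})=(\alpha_i)_{i\ge1}$ (an injective homomorphism onto the finitely supported sequences). $I^{\mathbb N}_\infty$ is the set of sequences with infinitely many zeros and infinitely many ones. The odometer $\mathbb O$: if $\alpha_1=\dots=\alpha_{n-1}=1$ and $\alpha_n=0$, then $\mathbb O[\alpha]_i=0$ for $i<n$, $\mathbb O[\alpha]_n=1$, $\mathbb O[\alpha]_i=\alpha_i$ for $i>n$. $\Psi=(F,A)$: define $\Phi[v]\in I^{\mathcal D_n}$ for $v\in\mathrm{OP}_n$ by $\Phi[v](0)=v$ if $n=0$, and for $v=(v_0,v_1)\in\mathrm{OP}_{n+1}$, $\Phi[v](h)=\Phi[v_0](h)$ for $h\in\mathcal D_n$, $\Phi[v](h)=\Phi[v_1](g_n+h)$ for $h\in\mathcal D_{n+1}\setminus\mathcal D_n$. For a path $x$ with vertices $v_n$ and edges $e_n$, $A[x]=\alpha$ with $\alpha_n$ the index of $e_{n-1}$, and $F[x](g)=\Phi[v_n](g+\sum_{i=0}^{n-1}\alpha_{i+1}g_i)$ for $g\in\mathcal D_n$, $n\ge1$. $\Psi[x]=(F[x],A[x])$ is a homeomorphism $\mathcal T(\mathrm{OP})\to I^{\mathcal D}\times I^{\mathbb N}$. *)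

(* Defs.v *)
From Stdlib Require Import Arith ZArith Bool List.

Fixpoint OPv (n : nat) : Type :=
  match n with
  | 0 => bool
  | S m => (OPv m * OPv m)%type
  end.

Definition comp (n : nat) (i : bool) (v : OPv (S n)) : OPv n :=
  if i then snd v else fst v.

(* An infinite path: vertices pv n : OP_n and edge indices pe n (the index of
   the edge e_n from floor n to floor n+1).  An edge of index i from v_n to
   v_{n+1} exists iff the i-th component of v_{n+1} is v_n, and the edge is
   determined by (v_{n+1}, i). *)
Record path := {
  pv : forall n, OPv n;
  pe : nat -> bool;
  pok : forall n, comp n (pe n) (pv (S n)) = pv n
}.

(* D = (+)_{i>=0} Z/2 is encoded as nat: sum_i a_i g_i <-> sum_i a_i 2^i,
   group law = bitwise xor, g_i = 2^i, D_n = {h | h < 2^n}. *)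
Definition Dadd (g h : nat) : nat := Nat.lxor g h.
Definition gen (i : nat) : nat := 2 ^ i.

(* Sequences alpha = (alpha_i)_{i>=1} in I^N are encoded as a : nat -> bool
   with a k = alpha_{k+1}. *)

(* tau (sum_i alpha_i g_{i-1}) = (alpha_i)_{i>=1}; in our encodings this is
   the bit sequence. *)
Definition tau (h : nat) : nat -> bool := fun k => Nat.testbit h k.

Definition Inf (a : nat -> bool) : Prop :=
  (forall N, exists k, N <= k /\ a k = false) /\
  (forall N, exists k, N <= k /\ a k = true).

(* Odometer: if alpha_1 = ... = alpha_{n-1} = 1, alpha_n = 0 then
   O[alpha]_i = 0 (i<n), 1 (i=n), alpha_i (i>n).  Equivalently, bit k is
   flipped iff all earlier bits are 1. *)
Definition odo (a : nat -> bool) : nat -> bool :=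
  fun k => if forallb a (seq 0 k) then negb (a k) else a k.

(* Phi[v] in I^{D_n}; values outside D_n are irrelevant (never used). *)
Fixpoint Phi (n : nat) : OPv n -> nat -> bool :=
  match n return OPv n -> nat -> bool with
  | 0 => fun v _ => v
  | S m => fun v h =>
      if h <? 2 ^ m then Phi m (fst v) h
      else Phi m (snd v) (Dadd (gen m) h)
  end.

Fixpoint bitsum (n : nat) (a : nat -> bool) : nat :=
  match n with
  | 0 => 0
  | S m => bitsum m a + (if a m then gen m else 0)
  end.

(* A[x] = alpha with alpha_n = index of e_{n-1}, i.e. (encoded) a k = pe x k *)
Definition Aof (x : path) : nat -> bool := pe x.

(* F[x](g) = Phi[v_n](g + sum_{i<n} alpha_{i+1} g_i) for g in D_n, n >= 1;
   we use n = g+1 (g < 2^(g+1)); the value is independent of the choice. *)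
Definition Fof (x : path) : nat -> bool :=
  fun g => Phi (S g) (pv x (S g)) (Dadd g (bitsum (S g) (pe x))).

Definition Psi (x : path) : (nat -> bool) * (nat -> bool) := (Fof x, Aof x).

(* Adic transformation, as a (functional) relation: Adic x y  <->  y = A x. *)
Definition Adic (x y : path) : Prop :=
  exists n,
    pe x n = false /\ (forall k, k < n -> pe x k = true) /\
    pe y n = true /\ (forall k, k < n -> pe y k = false) /\
    (forall k, n < k -> pe y k = pe x k) /\
    (forall m, n < m -> pv y m = pv x m).

Definition T0 (x : path) : Prop :=
  exists y : Z -> path, y 0%Z = x /\ forall k : Z, Adic (y k) (y (k + 1)%Z).

(* Main.v *)
Require Import Defs.
From Stdlib Require Import Arith ZArith Bool List Lia.
From Stdlib Require Import ClassicalEpsilon FunctionalExtensionality ProofIrrelevance Classical.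

Lemma lt_pow2_bits x m : x < 2^m <-> forall i, m <= i -> Nat.testbit x i = false.
Proof.
  split.
  - intros H i Hi. destruct (Nat.eq_dec x 0) as [->|Hx]; [apply Nat.bits_0|].
    apply Nat.bits_above_log2. apply Nat.log2_lt_pow2 in H; lia.
  - intros H. assert (E : x = x mod 2^m).
    { apply Nat.bits_inj; intro i. destruct (Nat.lt_ge_cases i m).
      + rewrite Nat.mod_pow2_bits_low; auto.
      + rewrite Nat.mod_pow2_bits_high, H; auto. }
    rewrite E. apply Nat.mod_upper_bound. apply Nat.pow_nonzero; lia.
Qed.

Lemma tb_Dadd x y i : Nat.testbit (Dadd x y) i = xorb (Nat.testbit x i) (Nat.testbit y i).
Proof. apply Nat.lxor_spec. Qed.
Lemma tb_gen m i : Nat.testbit (gen m) i = (m =? i).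
Proof. apply Nat.pow2_bits_eqb. Qed.

Lemma bitsum_lt n a : bitsum n a < 2^n.
Proof.
  induction n; simpl; [lia|]. unfold gen. destruct (a n); lia.
Qed.

Lemma tb_bitsum n a i : Nat.testbit (bitsum n a) i = (i <? n) && a i.
Proof.
  induction n.
  - simpl. apply Nat.bits_0.
  - simpl. destruct (a n) eqn:E.
    + rewrite Nat.add_nocarry_lxor.
      * rewrite Nat.lxor_spec, IHn, tb_gen.
        destruct (Nat.ltb_spec i n), (Nat.ltb_spec i (S n)), (Nat.eqb_spec n i); subst; simpl;
          try rewrite ?E; try lia; destruct (a i); reflexivity.
      * apply Nat.bits_inj; intro j. rewrite Nat.land_spec, Nat.bits_0, tb_gen.
        destruct (Nat.eqb_spec n j); [subst|rewrite andb_false_r; auto].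
        rewrite (proj1 (lt_pow2_bits _ _) (bitsum_lt j a)); auto.
    + rewrite Nat.add_0_r, IHn.
      destruct (Nat.ltb_spec i n), (Nat.ltb_spec i (S n)); simpl; try lia; auto.
      replace i with n by lia. rewrite E; auto.
Qed.

Ltac bits i := apply Nat.bits_inj; intro i; rewrite ?tb_Dadd, ?tb_bitsum, ?tb_gen.

Lemma ltb_testbit h m : h < 2^(S m) -> (h <? 2^m) = negb (Nat.testbit h m).
Proof.
  intros H. rewrite lt_pow2_bits in H.
  destruct (Nat.ltb_spec h (2^m)) as [H1|H1].
  - rewrite (proj1 (lt_pow2_bits _ _) H1 m); auto.
  - destruct (Nat.testbit h m) eqn:E; auto. exfalso.
    assert (h < 2^m); [|lia]. apply lt_pow2_bits. intros i Hi.
    destruct (Nat.eq_dec i m); [subst; auto|]. apply H; lia.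
Qed.

Lemma Phi_S m v h : h < 2^(S m) ->
  Phi (S m) v h = if Nat.testbit h m then Phi m (snd v) (Dadd (gen m) h) else Phi m (fst v) h.
Proof.
  intros H. cbn [Phi]. rewrite ltb_testbit by auto. destruct (Nat.testbit h m); reflexivity.
Qed.

Lemma Phi_ext n : forall v w : OPv n, (forall h, h < 2^n -> Phi n v h = Phi n w h) -> v = w.
Proof.
  induction n; intros v w H.
  - apply (H 0). simpl; lia.
  - destruct v as [v0 v1], w as [w0 w1]. f_equal.
    + apply IHn. intros h Hh. specialize (H h). cbn [Phi] in H.
      assert (h <? 2^n = true) as E by (apply Nat.ltb_lt; auto). rewrite E in H.
      apply H. simpl; lia.
    + apply IHn. intros h Hh. specialize (H (Dadd (gen n) h)).
      assert (Hl : Dadd (gen n) h < 2^(S n)).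
      { apply lt_pow2_bits. intros i Hi. rewrite tb_Dadd, tb_gen.
        rewrite (proj1 (lt_pow2_bits _ _) Hh) by lia.
        destruct (Nat.eqb_spec n i); [lia|auto]. }
      rewrite !Phi_S in H by auto. simpl in H.
      rewrite tb_Dadd, tb_gen, Nat.eqb_refl, (proj1 (lt_pow2_bits _ _) Hh) in H by lia.
      simpl in H. unfold Dadd in H. rewrite <- Nat.lxor_assoc, Nat.lxor_nilpotent, Nat.lxor_0_l in H.
      apply H; auto.
Qed.

Fixpoint build (n : nat) : (nat -> bool) -> OPv n :=
  match n return (nat -> bool) -> OPv n with
  | 0 => fun phi => phi 0
  | S m => fun phi => (build m phi, build m (fun h => phi (Dadd (gen m) h)))
  end.

Lemma build_spec n : forall phi h, h < 2^n -> Phi n (build n phi) h = phi h.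
Proof.
  induction n; intros phi h H.
  - simpl in *. f_equal. lia.
  - rewrite Phi_S by auto. cbn [fst snd build].
    destruct (Nat.testbit h n) eqn:E.
    + rewrite IHn. unfold Dadd. rewrite <- Nat.lxor_assoc, Nat.lxor_nilpotent, Nat.lxor_0_l; auto.
      apply lt_pow2_bits. intros i Hi. rewrite tb_Dadd, tb_gen.
      destruct (Nat.eqb_spec n i); [subst; rewrite E; auto|].
      apply lt_pow2_bits with (i:=i) in H; [rewrite H; auto|lia].
    + apply IHn. apply lt_pow2_bits. intros i Hi.
      destruct (Nat.eq_dec n i); [subst; auto|]. apply (proj1 (lt_pow2_bits _ _) H); lia.
Qed.

Lemma lt_Dadd x y m : x < 2^m -> y < 2^m -> Dadd x y < 2^m.
Proof.
  intros Hx Hy. apply lt_pow2_bits. intros i Hi. rewrite tb_Dadd.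
  rewrite (proj1 (lt_pow2_bits _ _) Hx), (proj1 (lt_pow2_bits _ _) Hy); auto.
Qed.

Lemma lt_pow_mono x m k : x < 2^m -> x < 2^(m+k).
Proof. intros H. rewrite Nat.pow_add_r. pose proof (Nat.pow_nonzero 2 k). nia. Qed.

Lemma Dadd_cancel h s : Dadd (Dadd h s) s = h.
Proof. unfold Dadd. rewrite Nat.lxor_assoc, Nat.lxor_nilpotent, Nat.lxor_0_r. auto. Qed.

Lemma Fstep (x : path) m g : g < 2^m ->
  Phi (S m) (pv x (S m)) (Dadd g (bitsum (S m) (pe x))) = Phi m (pv x m) (Dadd g (bitsum m (pe x))).
Proof.
  intros Hg. assert (Hg' : g < 2^(S m)) by (simpl; lia).
  rewrite Phi_S by (apply lt_Dadd; auto; apply bitsum_lt).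
  rewrite tb_Dadd, tb_bitsum, (proj1 (lt_pow2_bits _ _) Hg m) by lia.
  replace (m <? S m) with true by (symmetry; apply Nat.ltb_lt; lia). cbn [andb xorb].
  pose proof (pok x m) as P. destruct (pe x m) eqn:E; cbn [comp] in P; cbn [negb]; rewrite P.
  - f_equal. bits j. destruct (Nat.ltb_spec j m), (Nat.ltb_spec j (S m)), (Nat.eqb_spec m j);
      subst; simpl; try lia; try rewrite E; try rewrite (proj1 (lt_pow2_bits _ _) Hg j) by lia;
      destruct (Nat.testbit g j), (pe x j); auto.
  - f_equal. bits j. destruct (Nat.ltb_spec j m), (Nat.ltb_spec j (S m));
      simpl; try lia; auto. replace j with m by lia. rewrite E. auto.
Qed.

Lemma Fcons_k (x : path) g m k : g < 2^m ->
  Phi m (pv x m) (Dadd g (bitsum m (pe x))) = Phi (m+k) (pv x (m+k)) (Dadd g (bitsum (m+k) (pe x))).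
Proof.
  intros H. induction k.
  - rewrite Nat.add_0_r. auto.
  - rewrite IHk. replace (m + S k) with (S (m+k)) by lia. rewrite Fstep; auto.
    apply lt_pow_mono; auto.
Qed.

Lemma Fcons (x : path) g m : g < 2^m -> Fof x g = Phi m (pv x m) (Dadd g (bitsum m (pe x))).
Proof.
  intros H. unfold Fof. assert (Hg : g < 2^(S g)) by (pose proof (Nat.pow_gt_lin_r 2 g ltac:(lia)); simpl; lia).
  rewrite (Fcons_k x g (S g) m Hg), (Fcons_k x g m (S g) H). rewrite Nat.add_comm. auto.
Qed.

Lemma rep (x : path) n : pv x n = build n (fun h => Fof x (Dadd h (bitsum n (pe x)))).
Proof.
  apply Phi_ext. intros h Hh. rewrite build_spec by auto.
  rewrite (Fcons x _ n) by (apply lt_Dadd; auto; apply bitsum_lt). rewrite Dadd_cancel. auto.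
Qed.

Definition mkv (f a : nat -> bool) n : OPv n := build n (fun h => f (Dadd h (bitsum n a))).

Lemma mk_ok f a n : comp n (a n) (mkv f a (S n)) = mkv f a n.
Proof.
  apply Phi_ext. intros h Hh. unfold mkv. rewrite build_spec by auto.
  destruct (a n) eqn:E; cbn [comp fst snd build]; rewrite build_spec by auto; f_equal.
  - bits j. destruct (Nat.ltb_spec j n), (Nat.ltb_spec j (S n)), (Nat.eqb_spec n j);
      subst; simpl; try lia; try rewrite E; try rewrite (proj1 (lt_pow2_bits _ _) Hh j) by lia;
      destruct (Nat.testbit h j), (a j); auto.
  - bits j. destruct (Nat.ltb_spec j n), (Nat.ltb_spec j (S n));
      simpl; try lia; auto. replace j with n by lia. rewrite E. auto.
Qed.

Definition mkpath (f a : nat -> bool) : path := {| pv := mkv f a; pe := a; pok := mk_ok f a |}.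

Lemma Fof_mk f a : Fof (mkpath f a) = f.
Proof.
  apply FunctionalExtensionality.functional_extensionality. intro g.
  unfold Fof, mkpath; cbn [pv pe]; unfold mkv. rewrite build_spec.
  - rewrite Dadd_cancel. auto.
  - apply lt_Dadd; [pose proof (Nat.pow_gt_lin_r 2 g ltac:(lia)); simpl; lia|apply bitsum_lt].
Qed.

Lemma first_val (a : nat -> bool) b k : a k = b ->
  exists n, a n = b /\ forall j, j < n -> a j = negb b.
Proof.
  intros H. assert (G : forall N, (exists k, k < N /\ a k = b) ->
    exists n, a n = b /\ forall j, j < n -> a j = negb b).
  { induction N; intros [k0 [Hk Hak]]; [lia|].
    destruct (classic (exists k, k < N /\ a k = b)) as [Hex|Hno]; [auto|].
    exists N. split.
    - replace N with k0; auto. destruct (Nat.eq_dec k0 N); auto. exfalso; apply Hno; exists k0; split; auto; lia.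
    - intros j Hj. destruct (a j) eqn:E, b; auto; exfalso; apply Hno; exists j; auto. }
  apply (G (S k)). exists k; split; auto.
Qed.

Lemma forallb_first (a : nat -> bool) n k : a n = false -> (forall j, j < n -> a j = true) ->
  forallb a (seq 0 k) = (k <=? n).
Proof.
  intros H1 H2. destruct (Nat.leb_spec k n).
  - apply forallb_forall. intros x Hx. apply in_seq in Hx. apply H2; lia.
  - destruct (forallb a (seq 0 k)) eqn:E; auto. rewrite forallb_forall in E.
    rewrite E in H1; [discriminate|]. apply in_seq; lia.
Qed.

Lemma odo_val (a : nat -> bool) n k : a n = false -> (forall j, j < n -> a j = true) ->
  odo a k = if k <? n then false else if k =? n then true else a k.
Proof.
  intros H1 H2. unfold odo. rewrite (forallb_first a n k H1 H2).
  destruct (Nat.ltb_spec k n), (Nat.eqb_spec k n), (Nat.leb_spec k n); subst; try lia; auto.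
  - rewrite H2; auto.
  - rewrite H1; auto.
Qed.

Lemma mk_vertex (x : path) c d m : Dadd (bitsum m c) d = bitsum m (pe x) ->
  mkv (fun g => Fof x (Dadd g d)) c m = pv x m.
Proof.
  intros H. rewrite rep. unfold mkv. f_equal. apply functional_extensionality. intro h.
  f_equal. unfold Dadd in *. rewrite Nat.lxor_assoc, H. auto.
Qed.

Definition dd n := bitsum (S n) (fun _ => true).

Lemma tb_dd n i : Nat.testbit (dd n) i = (i <? S n).
Proof. unfold dd. rewrite tb_bitsum. apply andb_true_r. Qed.

Lemma adic_fwd (x : path) n : pe x n = false -> (forall k, k < n -> pe x k = true) ->
  Adic x (mkpath (fun g => Fof x (Dadd g (dd n))) (odo (pe x))).
Proof.
  intros H1 H2. exists n. cbn [pe mkpath].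
  repeat split; auto.
  - rewrite (odo_val _ n n H1 H2), Nat.ltb_irrefl, Nat.eqb_refl. auto.
  - intros k Hk. rewrite (odo_val _ n k H1 H2). destruct (Nat.ltb_spec k n); auto; lia.
  - intros k Hk. rewrite (odo_val _ n k H1 H2). destruct (Nat.ltb_spec k n), (Nat.eqb_spec k n); auto; lia.
  - intros m Hm. cbn [pv mkpath]. apply mk_vertex.
    bits i. rewrite tb_dd, (odo_val _ n i H1 H2).
    destruct (Nat.ltb_spec i m), (Nat.ltb_spec i n), (Nat.eqb_spec i n), (Nat.ltb_spec i (S n));
      subst; simpl; try lia; try rewrite H1; try rewrite H2 by lia; auto; destruct (pe x i); auto.
Qed.

Lemma adic_bwd (x : path) n : pe x n = true -> (forall k, k < n -> pe x k = false) ->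
  Adic (mkpath (fun g => Fof x (Dadd g (dd n)))
          (fun k => if k <? n then true else if k =? n then false else pe x k)) x.
Proof.
  intros H1 H2. exists n. cbn [pe mkpath].
  repeat split; auto.
  - rewrite Nat.ltb_irrefl, Nat.eqb_refl. auto.
  - intros k Hk. destruct (Nat.ltb_spec k n); auto; lia.
  - intros k Hk. destruct (Nat.ltb_spec k n), (Nat.eqb_spec k n); auto; lia.
  - intros m Hm. cbn [pv mkpath]. symmetry. apply mk_vertex.
    bits i. rewrite tb_dd.
    destruct (Nat.ltb_spec i m), (Nat.ltb_spec i n), (Nat.eqb_spec i n), (Nat.ltb_spec i (S n));
      subst; simpl; try lia; try rewrite H1; try rewrite H2 by lia; auto; destruct (pe x i); auto.
Qed.

Lemma Inf_agree (a b : nat -> bool) n : Inf a -> (forall k, n < k -> b k = a k) -> Inf b.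
Proof.
  intros [H0 H1] E. split; intros N.
  - destruct (H0 (N + S n)) as [k [Hk Hak]]. exists k. rewrite E by lia. split; auto; lia.
  - destruct (H1 (N + S n)) as [k [Hk Hak]]. exists k. rewrite E by lia. split; auto; lia.
Qed.

Lemma next_ex (x : path) : Inf (pe x) -> exists y, Adic x y /\ Inf (pe y).
Proof.
  intros HI. destruct (proj1 HI 0) as [k [_ Hk]].
  destruct (first_val _ false k Hk) as [n [H1 H2]].
  eexists; split; [apply (adic_fwd x n H1 H2)|].
  apply (Inf_agree (pe x) _ n HI). intros k' Hk'. cbn [pe mkpath].
  rewrite (odo_val _ n k' H1 H2). destruct (Nat.ltb_spec k' n), (Nat.eqb_spec k' n); auto; lia.
Qed.

Lemma prev_ex (x : path) : Inf (pe x) -> exists y, Adic y x /\ Inf (pe y).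
Proof.
  intros HI. destruct (proj2 HI 0) as [k [_ Hk]].
  destruct (first_val _ true k Hk) as [n [H1 H2]].
  eexists; split; [apply (adic_bwd x n H1 H2)|].
  apply (Inf_agree (pe x) _ n HI). intros k' Hk'. cbn [pe mkpath].
  destruct (Nat.ltb_spec k' n), (Nat.eqb_spec k' n); auto; lia.
Qed.

Lemma step_ex (fwd : bool) (x : path) : exists y : path,
  Inf (pe x) -> (if fwd then Adic x y else Adic y x) /\ Inf (pe y).
Proof.
  destruct (classic (Inf (pe x))) as [H|H].
  - destruct fwd; [destruct (next_ex x H) as [y Hy]|destruct (prev_ex x H) as [y Hy]]; exists y; auto.
  - exists x; tauto.
Qed.

Definition stp (fwd : bool) (x : path) : path :=
  proj1_sig (constructive_indefinite_description (fun y => Inf (pe x) -> (if fwd then Adic x y else Adic y x) /\ Inf (pe y)) (step_ex fwd x)).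

Lemma stp_spec (fwd : bool) (x : path) : Inf (pe x) -> (if fwd then Adic x (stp fwd x) else Adic (stp fwd x) x) /\ Inf (pe (stp fwd x)).
Proof. unfold stp. destruct (constructive_indefinite_description _ _); simpl; auto. Qed.

Fixpoint it (fwd : bool) (k : nat) (x : path) : path :=
  match k with 0 => x | S j => stp fwd (it fwd j x) end.

Lemma it_inf (fwd : bool) k (x : path) : Inf (pe x) -> Inf (pe (it fwd k x)).
Proof. intros H; induction k; simpl; auto. apply stp_spec; auto. Qed.

Lemma T0_of_inf (x : path) : Inf (pe x) -> T0 x.
Proof.
  intros H.
  exists (fun z => if (0 <=? z)%Z then it true (Z.to_nat z) x else it false (Z.to_nat (- z)) x).
  split; [reflexivity|]. intros k.
  destruct (Z.leb_spec 0 k), (Z.leb_spec 0 (k+1)); try lia.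
  - replace (Z.to_nat (k+1)) with (S (Z.to_nat k)) by lia. simpl.
    apply (stp_spec true). apply it_inf; auto.
  - assert (k = -1)%Z by lia. subst. simpl. apply (stp_spec false x H).
  - replace (Z.to_nat (-k)) with (S (Z.to_nat (-(k+1)))) by lia. simpl.
    apply (stp_spec false). apply it_inf; auto.
Qed.

Lemma bitsum_ext n a b : (forall k, k < n -> a k = b k) -> bitsum n a = bitsum n b.
Proof. induction n; intros H; simpl; auto. rewrite IHn by auto. rewrite H; auto. Qed.

Lemma bitsum_false n a : (forall k, k < n -> a k = false) -> bitsum n a = 0.
Proof. induction n; intros H; simpl; auto. rewrite IHn, H; auto. Qed.

Lemma bitsum_true n a : (forall k, k < n -> a k = true) -> bitsum n a + 1 = 2^n.
Proof.
  induction n; intros H; simpl; auto. rewrite H by lia. unfold gen.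
  specialize (IHn ltac:(auto)). lia.
Qed.

Lemma adic_incr (p q : path) : Adic p q -> exists n, pe p n = false /\ pe q n = true /\
  (forall k, n < k -> pe q k = pe p k) /\ forall m, n < m -> bitsum m (pe q) = bitsum m (pe p) + 1.
Proof.
  intros [n [H1 [H2 [H3 [H4 [H5 _]]]]]]. exists n. repeat split; auto.
  intros m Hm. induction m; [lia|].
  destruct (Nat.eq_dec m n).
  - subst. simpl. rewrite H1, H3. rewrite (bitsum_false n (pe q)) by auto.
    pose proof (bitsum_true n (pe p) H2). unfold gen. lia.
  - simpl. rewrite IHm by lia. rewrite H5 by lia. lia.
Qed.

Lemma T0_inf (x : path) : T0 x -> Inf (pe x).
Proof.
  intros [y [Hy0 Hy]]. split.
  - intros N. apply NNPP. intro Hno.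
    assert (All : forall k, N <= k -> pe x k = true).
    { intros k Hk; destruct (pe x k) eqn:E; auto; exfalso; apply Hno; exists k; auto. }
    assert (C : forall j, (forall k, N <= k -> pe (y (Z.of_nat j)) k = true) /\
                 bitsum N (pe (y (Z.of_nat j))) = bitsum N (pe x) + j).
    { induction j.
      - simpl. rewrite Hy0. split; auto.
      - destruct IHj as [I1 I2].
        destruct (adic_incr _ _ (Hy (Z.of_nat j))) as [n [A1 [A2 [A3 A4]]]].
        replace (Z.of_nat (S j)) with (Z.of_nat j + 1)%Z by lia.
        assert (n < N). { destruct (Nat.lt_ge_cases n N); auto. rewrite I1 in A1; auto. discriminate. }
        split.
        + intros k Hk. rewrite A3 by lia. auto.
        + rewrite A4 by auto. lia. }
    destruct (C (2^N)) as [_ C2]. pose proof (bitsum_lt N (pe (y (Z.of_nat (2^N))))). lia.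
  - intros N. apply NNPP. intro Hno.
    assert (All : forall k, N <= k -> pe x k = false).
    { intros k Hk; destruct (pe x k) eqn:E; auto; exfalso; apply Hno; exists k; auto. }
    assert (C : forall j, (forall k, N <= k -> pe (y (- Z.of_nat j)%Z) k = false) /\
                 bitsum N (pe (y (- Z.of_nat j)%Z)) + j = bitsum N (pe x)).
    { induction j.
      - simpl. rewrite Hy0. split; auto.
      - destruct IHj as [I1 I2].
        pose proof (Hy (- Z.of_nat (S j))%Z) as HA.
        replace (- Z.of_nat (S j) + 1)%Z with (- Z.of_nat j)%Z in HA by lia.
        destruct (adic_incr _ _ HA) as [n [A1 [A2 [A3 A4]]]].
        assert (n < N). { destruct (Nat.lt_ge_cases n N); auto. rewrite I1 in A2; auto. discriminate. }
        split.
        + intros k Hk. rewrite <- A3 by lia. auto.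
        + rewrite A4 in I2 by auto. lia. }
    destruct (C (S (bitsum N (pe x)))) as [_ C2]. lia.
Qed.

Lemma Psi_inj (x x' : path) : Psi x = Psi x' -> x = x'.
Proof.
  intros H. unfold Psi, Aof in H. injection H as HF HA.
  assert (Hv : pv x = pv x').
  { apply functional_extensionality_dep. intro n. rewrite !rep, HF, HA. auto. }
  destruct x as [v e o], x' as [v' e' o']. simpl in *. subst.
  f_equal. apply proof_irrelevance.
Qed.

Lemma Adic_det (x y : path) n : pe x n = false -> (forall k, k < n -> pe x k = true) -> Adic x y ->
  pe y = odo (pe x) /\ forall m, n < m -> pv y m = pv x m.
Proof.
  intros H1 H2 [n' [B1 [B2 [B3 [B4 [B5 B6]]]]]].
  assert (n' = n).
  { destruct (Nat.lt_total n n') as [Hl|[Hl|Hl]]; auto.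
    - rewrite B2 in H1 by auto. discriminate.
    - rewrite H2 in B1 by auto. discriminate. }
  subst n'. split; auto.
  apply functional_extensionality. intro k. rewrite (odo_val _ n k H1 H2).
  destruct (Nat.ltb_spec k n), (Nat.eqb_spec k n); subst; auto. apply B5; lia.
Qed.

Theorem proposition1 :
  (forall x : path, T0 x -> Inf (Aof x)) /\
  (forall x x' : path, T0 x -> T0 x' -> Psi x = Psi x' -> x = x') /\
  (forall (f : nat -> bool) (a : nat -> bool), Inf a ->
     exists x : path, T0 x /\ Psi x = (f, a)) /\
  (forall (f : nat -> bool) (a : nat -> bool), Inf a ->
     forall x : path, Psi x = (f, a) ->
       exists d : nat,
         tau d = (fun k => xorb (odo a k) (a k)) /\
         (exists y : path, Adic x y) /\
         (forall y : path, Adic x y ->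
            Psi y = ((fun g => f (Dadd g d)), odo a))).
Proof.
  split; [exact T0_inf|]. split; [intros; apply Psi_inj; auto|]. split.
  - intros f a Ha. exists (mkpath f a). split.
    + apply T0_of_inf. exact Ha.
    + unfold Psi. rewrite Fof_mk. reflexivity.
  - intros f a Ha x Hx. unfold Psi, Aof in Hx. injection Hx as HF HA. subst f a.
    destruct (proj1 Ha 0) as [k [_ Hk]].
    destruct (first_val _ false k Hk) as [n [H1 H2]].
    exists (dd n). split; [|split].
    + apply functional_extensionality. intro i. unfold tau. rewrite tb_dd.
      rewrite (odo_val _ n i H1 H2).
      destruct (Nat.ltb_spec i n), (Nat.eqb_spec i n), (Nat.ltb_spec i (S n)); subst; try lia;
        try rewrite H1; try rewrite H2 by lia; auto; destruct (pe x i); auto.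
    + eexists. apply (adic_fwd x n H1 H2).
    + intros y Hy. destruct (Adic_det x y n H1 H2 Hy) as [E V].
      unfold Psi, Aof. rewrite E. f_equal.
      apply functional_extensionality. intro g.
      set (m := S g + n).
      assert (Hg : g < 2^m) by (apply lt_pow_mono; pose proof (Nat.pow_gt_lin_r 2 g ltac:(lia)); simpl; lia).
      assert (Hd : dd n < 2^m) by (replace m with (S n + g) by lia; apply lt_pow_mono; apply bitsum_lt).
      rewrite (Fcons y g m Hg), (Fcons x (Dadd g (dd n)) m) by (apply lt_Dadd; auto).
      rewrite V by lia. f_equal. rewrite E.
      bits i. rewrite tb_dd, (odo_val _ n i H1 H2).
      destruct (Nat.ltb_spec i m), (Nat.ltb_spec i n), (Nat.eqb_spec i n), (Nat.ltb_spec i (S n));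
        subst; simpl; try lia; try rewrite H1; try rewrite H2 by lia;
        try (destruct (Nat.testbit g i), (pe x i)); auto; destruct (Nat.testbit g n); auto.
Qed.
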